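(* Let $G=(\sigma,\mu)$ be a complete f-graph with $|\sigma^*|=n$, and let $e=pq\in\mu^*$. Then the f-graph $G/_{pq}=(\sigma_c,\mu_c)$ obtained by fuzzy vertex pooling of $p$ and $q$ is a complete f-graph.
   Context: A f-graph is a triple $G=(\zeta,\sigma,\mu)$ (written $G=(\sigma,\mu)$) with $\sigma:\zeta\to[0,1]$, $\mu:\zeta\times\zeta\to[0,1]$ symmetric, such that $\mu(pq)\le\sigma(p)\wedge\sigma(q)$ for all $p,q$ ($\wedge$ = minimum). $\sigma^*=\{v:\sigma(v)>0\}$ is the vertex set and $\mu^*=\{pq:\mu(pq)>0\}$ the edge set; $N(p)=\{w:\mu(wp)>0\}$. A f-graph is complete (a CFG) if $\mu(uv)=\sigma(u)\wedge\sigma(v)$ for all distinct $u,v\in\sigma^*$. Fuzzy vertex pooling: for distinct $p,q\in\sigma^*$, $G/_{pq}=(\sigma_c,\mu_c)$ has vertex set $(\sigma^*\setminus\{p,q\})\cup\{v_c\}$ with $v_c$ a new vertex; $\sigma_c(v)=\sigma(v)$ for $v\ne v_c$ and $\sigma_c(v_c)=\sigma(p)\wedge\sigma(q)$; for $u,w\in\sigma^*\setminus\{p,q\}$, $\mu_c(uw)=\mu(uw)$; for $w\in\sigma^*\setminus\{p,q\}$, $\mu_c(wv_c)=\mu(wp)$ if $w\in N(p)\setminus N(q)$, $\mu_c(wv_c)=\mu(wq)$ if $w\in N(q)\setminus N(p)$, $\mu_c(wv_c)=\mu(wp)\wedge\mu(wq)$ if $w\in N(p)\cap N(q)$, and $\mu_c(wv_c)=0$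 otherwise (the edge $pq$, if present, disappears). *)

(* Defs.v *)
From HB Require Import structures.
From mathcomp Require Import all_boot all_order all_algebra.
Set Implicit Arguments. Unset Strict Implicit. Unset Printing Implicit Defensive.
Import Order.TTheory GRing.Theory Num.Theory.
Local Open Scope ring_scope.

Section FGraph.
Variable R : realFieldType.

Definition is_fgraph (T : Type) (sigma : T -> R) (mu : T -> T -> R) : Prop :=
  (forall v, 0 <= sigma v <= 1) /\
  (forall u v, 0 <= mu u v <= 1) /\
  (forall u v, mu u v = mu v u) /\
  (forall u v, mu u v <= Num.min (sigma u) (sigma v)).

Definition is_complete_fgraph (T : eqType) (sigma : T -> R) (mu : T -> T -> R)
  : Prop :=
  is_fgraph sigma mu /\
  (forall u v, u != v -> 0 < sigma u -> 0 < sigma v ->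
     mu u v = Num.min (sigma u) (sigma v)).

(* Fuzzy vertex pooling of p and q.  The new universe is option T:
   Some v is the old vertex v, None is the new vertex v_c.
   The old vertices p and q are removed (membership value 0). *)
Definition pool_sigma (T : eqType) (sigma : T -> R) (p q : T) (x : option T) : R :=
  match x with
  | None => Num.min (sigma p) (sigma q)
  | Some v => if (v == p) || (v == q) then 0 else sigma v
  end.

Definition pool_edge (T : eqType) (mu : T -> T -> R) (p q w : T) : R :=
  let inNp := 0 < mu w p in
  let inNq := 0 < mu w q in
  if inNp && ~~ inNq then mu w p
  else if inNq && ~~ inNp then mu w q
  else if inNp && inNq then Num.min (mu w p) (mu w q)
  else 0.

Definition pool_mu (T : eqType) (mu : T -> T -> R) (p q : T) (x y : option T) : R :=
  match x, y with
  | Some u, Some w =>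
      if [|| u == p, u == q, w == p | w == q] then 0 else mu u w
  | Some w, None | None, Some w =>
      if (w == p) || (w == q) then 0 else pool_edge mu p q w
  | None, None => 0
  end.

End FGraph.

Definition vertex_set (R : realFieldType) (T : finType) (sigma : T -> R) : {set T} :=
  [set v | 0 < sigma v].

(* Main.v *)
Require Import Defs.
From mathcomp Require Import all_boot all_order all_algebra.
Import Order.TTheory GRing.Theory Num.Theory.
Local Open Scope ring_scope.

Lemma pool_edgeE (R : realFieldType) (T : finType)
  (sigma : T -> R) (mu : T -> T -> R) (p q w : T) :
  is_complete_fgraph sigma mu -> p != q -> 0 < mu p q ->
  w != p -> w != q ->
  pool_edge mu p q w = Num.min (sigma w) (Num.min (sigma p) (sigma q)).
Proof.
move=> [[Hs [Hm [Hsym Hle]]] Hc] pq mpq wp wq.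
have := Hle p q; rewrite le_min => /andP [h1 h2].
have sp : 0 < sigma p by apply: lt_le_trans h1.
have sq : 0 < sigma q by apply: lt_le_trans h2.
have /andP [sw0 _] := Hs w.
rewrite /pool_edge.
case: (ltP 0 (sigma w)) => sw.
  rewrite (Hc w p wp sw sp) (Hc w q wq sw sq).
  rewrite !lt_min sw sp sq /=.
  by rewrite minA -[in RHS](minxx (sigma w)) -!minA (minCA (sigma p)).
have sw' : sigma w = 0 by apply/eqP; rewrite eq_le sw sw0.
have e1 : mu w p = 0.
  apply/eqP; rewrite eq_le; have /andP [-> _] := Hm w p; rewrite andbT.
  by apply: (le_trans (Hle w p)); rewrite sw' ge_min lexx.
have e2 : mu w q = 0.
  apply/eqP; rewrite eq_le; have /andP [-> _] := Hm w q; rewrite andbT.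
  by apply: (le_trans (Hle w q)); rewrite sw' ge_min lexx.
rewrite e1 e2 ltxx sw' /=.
by apply/esym/min_idPl; rewrite le_min !ltW.
Qed.

Theorem mainTheorem1 (R : realFieldType) (T : finType) (n : nat)
  (sigma : T -> R) (mu : T -> T -> R) (p q : T) :
  is_complete_fgraph sigma mu ->
  #|vertex_set sigma|%N = n ->
  p != q -> 0 < mu p q ->
  is_complete_fgraph (pool_sigma sigma p q) (pool_mu mu p q).
Proof.
move=> H _ pq mpq.
have PE := fun w => @pool_edgeE R T sigma mu p q w H pq mpq.
move: H => [[Hs [Hm [Hsym Hle]]] Hc].
have := Hle p q; rewrite le_min => /andP [h1 h2].
have sp : 0 < sigma p by apply: lt_le_trans h1.
have sq : 0 < sigma q by apply: lt_le_trans h2.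
have Hs' : forall v, 0 <= pool_sigma sigma p q v <= 1.
  case=> [v|] /=; first by case: ifP => _ //; rewrite lexx ler01.
  have /andP [a b] := Hs p; have /andP [c d] := Hs q.
  by rewrite le_min a c /= ge_min b.
have B : forall w, 0 <= Num.min (sigma w) (Num.min (sigma p) (sigma q)) <= 1.
  move=> w; have /andP [a b] := Hs p; have /andP [c d] := Hs q.
  have /andP [e f] := Hs w.
  by rewrite !le_min a c e /= ge_min f.
have S0 : forall v, 0 <= pool_sigma sigma p q v by move=> v; case/andP: (Hs' v).
split; [split; [exact: Hs' | split; [|split]] |].
- case=> [u|] [w|] /=.
  + by case: ifP => _; [rewrite lexx ler01 | exact: Hm].
  + case: ifP => /norP; [by rewrite lexx ler01|] => -[wp wq].
    by rewrite PE // B.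
  + case: ifP => /norP; [by rewrite lexx ler01|] => -[wp wq].
    by rewrite PE // B.
  + by rewrite lexx ler01.
- case=> [u|] [w|] //=.
  by rewrite Hsym; do 4 case: (_ == _).
- case=> [u|] [w|] /=.
  + case: ifP => h; first by rewrite le_min (S0 (Some u)) (S0 (Some w)).
    move: h; case: (u =P p) => //; case: (u =P q) => //;
      case: (w =P p) => //; case: (w =P q) => //= *; exact: Hle.
  + case: ifP => h; first by rewrite le_min lexx (S0 None).
    by move/norP: h => [up uq]; rewrite PE.
  + case: ifP => h; first by rewrite le_min lexx (S0 None).
    by move/norP: h => [up uq]; rewrite PE // minC.
  + by rewrite minxx (S0 None).
- case=> [u|] [w|] //= neq.
  + case: ifP => h; first by rewrite ltxx.
    case: ifP => h'; first by move=> _; rewrite ltxx.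
    move/norP: h => [up uq]; move/norP: h' => [wp wq].
    rewrite (negbTE up) (negbTE uq) ?(negbTE wp) ?(negbTE wq) /= => a b.
    apply: Hc => //; apply: contra neq => /eqP ->; exact: eqxx.
  + case: ifP => h; first by rewrite ltxx.
    by move/norP: h => [up uq] _ _; rewrite PE.
  + case: ifP => h; first by move=> _; rewrite ltxx.
    by move/norP: h => [up uq] _ _; rewrite PE // minC.
Qed.
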